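(* Let $0<\kappa<\frac13$ and define $g:\mathbb{R}\to\mathbb{R}$ by $g(t)=\sqrt{1-\kappa t^2}$ if $0\leq t<1$, $g(t)=\frac{\kappa}{t\sqrt{1-\kappa}}+\frac{1-2\kappa}{\sqrt{1-\kappa}}$ if $t\geq1$, and $g(t)=g(-t)$ for $t<0$. Let $G(t)=\int_0^tg(s)\,ds$ and $G^{-1}$ its inverse. Then: (1) $\lim_{t\to0}\frac{G^{-1}(t)}{t}=1$; (2) $\lim_{t\to\infty}\frac{G^{-1}(t)}{t}=\frac{\sqrt{1-\kappa}}{1-2\kappa}$; (3) $t\leq G^{-1}(t)\leq 3t$ for all $t\geq0$; (4) $-\frac32\leq\frac{t}{g(t)}g'(t)\leq0$ for all $t\geq0$.
   Context: The function $g$ is $C^1$, even, with values in $(\frac{1-2\kappa}{\sqrt{1-\kappa}},1]$, and $G$ is a strictly increasing odd bijection of $\mathbb{R}$. *)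

(* Defs.v *)
From Stdlib Require Import Reals.
From Coquelicot Require Export Coquelicot.
Open Scope R_scope.

Definition g_pos (kappa t : R) : R :=
  if Rlt_dec t 1 then sqrt (1 - kappa * t ^ 2)
  else kappa / (t * sqrt (1 - kappa)) + (1 - 2 * kappa) / sqrt (1 - kappa).

Definition g (kappa t : R) : R := g_pos kappa (Rabs t).

Definition G (kappa t : R) : R := RInt (g kappa) 0 t.

(* Main.v *)
Require Import Defs.
From Stdlib Require Import Reals Lra Psatz.
From Coquelicot Require Import Coquelicot.
Open Scope R_scope.

Section S.
Variable k : R.
Hypothesis k0 : 0 < k.
Hypothesis k1 : k < 1/3.

Definition sk := sqrt (1 - k).
Definition ca := k / sk.
Definition cc := (1 - 2*k) / sk.

Lemma sk_pos : 0 < sk.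
Proof. unfold sk; apply sqrt_lt_R0; lra. Qed.

Lemma sk_sq : sk * sk = 1 - k.
Proof. unfold sk; apply sqrt_sqrt; lra. Qed.

Lemma sk_le1 : sk <= 1.
Proof. rewrite <- sqrt_1; unfold sk; apply sqrt_le_1_alt; lra. Qed.

Lemma cc_pos : 1/3 < cc.
Proof.
  unfold cc. pose proof sk_pos. pose proof sk_sq.
  apply Rmult_lt_reg_r with sk; auto. replace ((1 - 2 * k) / sk * sk) with (1 - 2*k) by (field; lra).
  assert (sk < 3 * (1 - 2*k)); [|lra].
  apply Rsqr_incrst_0; unfold Rsqr; try lra. rewrite sk_sq. nra.
Qed.

Lemma ca_pos : 0 < ca.
Proof. unfold ca; pose proof sk_pos; apply Rdiv_lt_0_compat; lra. Qed.

Lemma ca_cc : ca + cc = sk.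
Proof. unfold ca, cc. pose proof sk_pos. pose proof sk_sq.
  apply Rmult_eq_reg_r with sk; [|lra]. field_simplify; lra. Qed.

Lemma g_pos_hi t : 1 <= t -> g_pos k t = ca / t + cc.
Proof. intros. unfold g_pos. destruct (Rlt_dec t 1); [lra|]. unfold ca, cc, sk.
  pose proof sk_pos. unfold sk in *. field. split; lra. Qed.

Lemma g_pos_lo t : t < 1 -> g_pos k t = sqrt (1 - k * t^2).
Proof. intros. unfold g_pos. destruct (Rlt_dec t 1); [auto|lra]. Qed.

Lemma g_pos_1 : g_pos k 1 = sk.
Proof. rewrite g_pos_hi by lra. rewrite <- ca_cc. field. Qed.

Lemma g_pos_dec x y : 0 <= x <= y -> g_pos k y <= g_pos k x.
Proof.
  intros [Hx Hxy].
  destruct (Rlt_dec y 1).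
  - rewrite !g_pos_lo by lra. apply sqrt_le_1_alt. assert (x^2 <= y^2) by nra. nra.
  - destruct (Rlt_dec x 1).
    + rewrite (g_pos_lo x) by lra. rewrite g_pos_hi by lra.
      apply Rle_trans with sk.
      * rewrite <- ca_cc. pose proof ca_pos. apply Rplus_le_compat_r.
        unfold Rdiv. rewrite <- (Rmult_1_r ca) at 2. apply Rmult_le_compat_l; [lra|].
        rewrite <- Rinv_1. apply Rinv_le_contravar; lra.
      * unfold sk; apply sqrt_le_1_alt; assert (x^2 <= 1) by nra. nra.
    + rewrite !g_pos_hi by lra. pose proof ca_pos. apply Rplus_le_compat_r.
      unfold Rdiv. apply Rmult_le_compat_l; [lra|]. apply Rinv_le_contravar; lra.
Qed.

Lemma g_pos_le1 x : 0 <= x -> g_pos k x <= 1.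
Proof. intros. apply Rle_trans with (g_pos k 0). apply g_pos_dec; lra.
  rewrite g_pos_lo by lra. replace (1 - k * 0^2) with 1 by ring. rewrite sqrt_1; lra. Qed.

Lemma g_pos_gecc x : 0 <= x -> cc <= g_pos k x.
Proof.
  intros. destruct (Rlt_dec x 1).
  - apply Rle_trans with (g_pos k 1). rewrite g_pos_1. rewrite <- ca_cc.
    pose proof ca_pos; lra. apply g_pos_dec; lra.
  - rewrite g_pos_hi by lra. pose proof ca_pos.
    assert (0 <= ca / x). apply Rle_mult_inv_pos; lra. lra.
Qed.

Lemma g_pos_small x e : 0 < e -> 1 <= x -> ca / e <= x -> g_pos k x <= cc + e.
Proof.
  intros. rewrite g_pos_hi by lra. pose proof ca_pos.
  assert (ca / x <= e). { apply Rmult_le_reg_r with x; [lra|]. unfold Rdiv. rewrite Rmult_assoc, Rinv_l by lra.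
    apply Rmult_le_compat_r with (r:=e) in H1; [|lra]. unfold Rdiv in H1. rewrite Rmult_assoc, Rinv_l in H1 by lra. lra. }
  lra.
Qed.


Lemma loc_lt y : y < 1 -> locally y (fun t => t < 1).
Proof. intros. assert (0 < 1 - y) by lra. exists (mkposreal _ H0). intros t Ht.
  unfold ball in Ht; simpl in Ht; unfold AbsRing_ball, abs, minus, plus, opp in Ht; simpl in Ht.
  apply Rabs_lt_between in Ht. lra. Qed.

Lemma loc_gt y : 1 < y -> locally y (fun t => 1 < t).
Proof. intros. assert (0 < y - 1) by lra. exists (mkposreal _ H0). intros t Ht.
  unfold ball in Ht; simpl in Ht; unfold AbsRing_ball, abs, minus, plus, opp in Ht; simpl in Ht.
  apply Rabs_lt_between in Ht. lra. Qed.

Lemma f1_der y : 0 <= y <= 1 -> is_derive (fun t => sqrt (1 - k * t^2)) y (- (k * y) / sqrt (1 - k * y^2)).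
Proof.
  intros. assert (0 < 1 - k * y^2) by nra.
  auto_derive. lra. replace (1 + - (k*(y*(y*1)))) with (1 - k*y^2) by ring. assert (0 < sqrt (1 - k*y^2)) by (apply sqrt_lt_R0; lra). field. lra.
Qed.

Lemma D1 y : 0 <= y < 1 -> is_derive (g_pos k) y (- (k * y) / sqrt (1 - k * y^2)).
Proof.
  intros. eapply is_derive_ext_loc; [|apply f1_der; lra].
  generalize (loc_lt y (proj2 H)). apply filter_imp. intros. rewrite g_pos_lo; auto.
Qed.

Lemma f2_der y : 0 < y -> is_derive (fun t => ca / t + cc) y (- ca / y^2).
Proof. intros. auto_derive. lra. field. lra. Qed.

Lemma D2 y : 1 < y -> is_derive (g_pos k) y (- ca / y^2).
Proof.
  intros. eapply is_derive_ext_loc; [|apply f2_der; lra].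
  generalize (loc_gt y H). apply filter_imp. intros. rewrite g_pos_hi; auto; lra.
Qed.

Lemma patch (f f1 f2 : R -> R) x l :
  derivable_pt_lim f1 x l -> derivable_pt_lim f2 x l -> f x = f1 x -> f x = f2 x ->
  (forall h, h < 0 -> f (x+h) = f1 (x+h)) -> (forall h, 0 < h -> f (x+h) = f2 (x+h)) ->
  derivable_pt_lim f x l.
Proof.
  intros H1 H2 E1 E2 L R eps He.
  destruct (H1 eps He) as [d1 Hd1]. destruct (H2 eps He) as [d2 Hd2].
  assert (0 < Rmin d1 d2) by (apply Rmin_pos; apply cond_pos).
  exists (mkposreal _ H). intros h Hh Ha. simpl in Ha.
  destruct (Rlt_dec h 0).
  - rewrite L, E1 by auto. apply Hd1; auto. apply Rlt_le_trans with (1:=Ha), Rmin_l.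
  - rewrite R, E2 by lra. apply Hd2; auto. apply Rlt_le_trans with (1:=Ha), Rmin_r.
Qed.

Lemma D3 : is_derive (g_pos k) 1 (- ca).
Proof.
  apply is_derive_Reals.
  apply patch with (f1 := fun t => sqrt (1 - k * t^2)) (f2 := fun t => ca / t + cc).
  - apply is_derive_Reals. replace (- ca) with (- (k*1) / sqrt (1 - k * 1^2)).
    apply f1_der. lra. unfold ca, sk. replace (1 - k * 1^2) with (1 - k) by ring.
    assert (0 < sqrt (1-k)) by (apply sqrt_lt_R0; lra). field. lra.
  - apply is_derive_Reals. replace (- ca) with (- ca / 1^2) by field. apply f2_der; lra.
  - rewrite g_pos_1. unfold sk. f_equal. ring.
  - rewrite g_pos_1. rewrite <- ca_cc. field.
  - intros. apply g_pos_lo; lra.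
  - intros. apply g_pos_hi; lra.
Qed.

Lemma gpos_ex y : 0 <= y -> ex_derive (g_pos k) y.
Proof.
  intros. destruct (Rlt_dec y 1). eexists; apply D1; lra.
  destruct (Req_dec y 1). subst. eexists; apply D3.
  eexists; apply D2; lra.
Qed.

Lemma g_cont x : continuous (g k) x.
Proof.
  unfold g. refine (continuous_comp Rabs (g_pos k) x _ _).
  apply continuous_Rabs. apply (ex_derive_continuous (K:=R_AbsRing) (V:=R_NormedModule) (g_pos k)). apply gpos_ex, Rabs_pos.
Qed.

Lemma g_int a b : ex_RInt (g k) a b.
Proof. apply (ex_RInt_continuous (V:=R_CompleteNormedModule)). intros; apply g_cont. Qed.

Lemma g_le1 x : g k x <= 1.
Proof. apply g_pos_le1, Rabs_pos. Qed.
Lemma g_gecc x : cc <= g k x.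
Proof. apply g_pos_gecc, Rabs_pos. Qed.
Lemma g_mono x s : Rabs s <= Rabs x -> g k x <= g k s.
Proof. intros. apply g_pos_dec. split; auto. apply Rabs_pos. Qed.

Lemma RInt_bounds (f : R -> R) a b m M : a <= b -> ex_RInt f a b ->
  (forall x, a < x < b -> m <= f x <= M) -> m * (b - a) <= RInt f a b <= M * (b - a).
Proof.
  intros. split.
  - replace (m * (b - a)) with (RInt (fun _ => m) a b).
    apply RInt_le; auto. apply ex_RInt_const. intros; apply H1; auto.
    rewrite RInt_const. unfold scal; simpl; unfold mult; simpl; ring.
  - replace (M * (b - a)) with (RInt (fun _ => M) a b).
    apply RInt_le; auto. apply ex_RInt_const. intros; apply H1; auto.
    rewrite RInt_const. unfold scal; simpl; unfold mult; simpl; ring.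
Qed.

Lemma G_ratio x : x <> 0 -> g k x <= G k x / x <= 1 /\ cc <= G k x / x.
Proof.
  intros Hx. unfold G. destruct (Rlt_dec 0 x).
  - destruct (RInt_bounds (g k) 0 x (g k x) 1) as [A B]; [lra|apply g_int| |].
    { intros s Hs. split. apply g_mono. rewrite !Rabs_pos_eq; lra. apply g_le1. }
    destruct (RInt_bounds (g k) 0 x cc 1) as [C _]; [lra|apply g_int| |].
    { intros s Hs. split. apply g_gecc. apply g_le1. }
    split; [split|]; [apply Rmult_le_reg_r with x; auto; unfold Rdiv; rewrite Rmult_assoc, Rinv_l; lra ..].
  - assert (x < 0) by lra.
    rewrite <- opp_RInt_swap by apply g_int. unfold opp; simpl.
    destruct (RInt_bounds (g k) x 0 (g k x) 1) as [A B]; [lra|apply g_int| |].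
    { intros s Hs. split. apply g_mono. rewrite !Rabs_left; lra. apply g_le1. }
    destruct (RInt_bounds (g k) x 0 cc 1) as [C _]; [lra|apply g_int| |].
    { intros s Hs. split. apply g_gecc. apply g_le1. }
    replace (- RInt (g k) x 0 / x) with (RInt (g k) x 0 / (-x)) by (field; lra).
    split; [split|]; [apply Rmult_le_reg_r with (-x); [lra|]; unfold Rdiv; rewrite Rmult_assoc, Rinv_l; lra ..].
Qed.

Lemma loc_pos y : 0 < y -> locally y (fun t => 0 < t).
Proof. intros. exists (mkposreal _ H). intros t Ht.
  unfold ball in Ht; simpl in Ht; unfold AbsRing_ball, abs, minus, plus, opp in Ht; simpl in Ht.
  apply Rabs_lt_between in Ht. lra. Qed.

Lemma g_der t l : 0 < t -> is_derive (g_pos k) t l -> Derive (g k) t = l.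
Proof.
  intros. apply is_derive_unique. eapply is_derive_ext_loc; [|apply H0].
  generalize (loc_pos t H). apply filter_imp. intros. unfold g. rewrite Rabs_pos_eq; lra.
Qed.

Lemma part4 t : 0 <= t -> -(3 / 2) <= t / g k t * Derive (g k) t /\
     t / g k t * Derive (g k) t <= 0.
Proof.
  intros Ht. destruct (Req_dec t 0).
  { subst. replace (0 / g k 0 * Derive (g k) 0) with 0 by (unfold Rdiv; ring). lra. }
  assert (tp : 0 < t) by lra.
  assert (E : g k t = g_pos k t) by (unfold g; rewrite Rabs_pos_eq; lra).
  rewrite E.
  destruct (Rlt_dec t 1).
  - rewrite (g_der t _ tp (D1 t ltac:(lra))). rewrite g_pos_lo by lra.
    assert (0 < 1 - k * t^2) by nra.
    pose proof (sqrt_lt_R0 _ H0). pose proof (sqrt_sqrt _ (Rlt_le _ _ H0)).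
    set (q := sqrt (1 - k * t^2)) in *.
    replace (t / q * (- (k * t) / q)) with (- (k * t^2) / (q * q)) by (field; lra).
    rewrite H2. split.
    + apply Rmult_le_reg_r with (1 - k * t^2); [lra|]. unfold Rdiv. rewrite Rmult_assoc, Rinv_l by lra.
      nra.
    + apply Rmult_le_reg_r with (1 - k * t^2); [lra|]. unfold Rdiv. rewrite Rmult_assoc, Rinv_l by lra.
      nra.
  - assert (Dv : Derive (g k) t = - ca / t^2).
    { destruct (Req_dec t 1). subst. rewrite (g_der 1 _ tp D3). field.
      apply g_der; auto. apply D2; lra. }
    rewrite Dv, g_pos_hi by lra. pose proof ca_pos. pose proof cc_pos.
    replace (t / (ca / t + cc) * (- ca / t ^ 2)) with (- ca / (ca + cc * t)).
    2:{ assert (0 < ca + cc * t) by nra. assert (0 < ca / t) by (apply Rdiv_lt_0_compat; lra).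
        field. repeat split; lra. }
    split.
    + apply Rmult_le_reg_r with (ca + cc * t); [nra|]. unfold Rdiv. rewrite Rmult_assoc, Rinv_l by nra.
      nra.
    + apply Rmult_le_reg_r with (ca + cc * t); [nra|]. unfold Rdiv. rewrite Rmult_assoc, Rinv_l by nra.
      nra.
Qed.
End S.

Lemma div_le t x c : 0 < x -> t / x <= c -> t <= c * x.
Proof. intros. replace t with (t / x * x) by (field; lra). apply Rmult_le_compat_r; lra. Qed.
Lemma div_ge t x c : 0 < x -> c <= t / x -> c * x <= t.
Proof. intros. replace t with (t / x * x) by (field; lra). apply Rmult_le_compat_r; lra. Qed.

Lemma G0 k : G k 0 = 0.
Proof. unfold G. rewrite RInt_point. reflexivity. Qed.

Lemma part1 (kappa : R) (Ginv : R -> R) :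
  0 < kappa -> kappa < 1 / 3 ->
  (forall t, G kappa (Ginv t) = t) ->
  (forall x, Ginv (G kappa x) = x) ->
  forall eps : posreal, exists d : posreal, forall y : R, Rabs y < d -> y <> 0 ->
    Rabs (Ginv y / y - 1) < eps.
Proof.
  intros k0 k1 HGi HiG eps.
  pose proof (cc_pos kappa k0 k1) as Hcc.
  assert (Hne : forall t, t <> 0 -> Ginv t <> 0).
  { intros t Ht E. apply Ht. rewrite <- (HGi t), E. apply G0. }
  assert (Hq : forall t, t <> 0 -> Ginv t / t = 1 / (G kappa (Ginv t) / Ginv t)).
  { intros t Ht. pose proof (Hne t Ht). rewrite (HGi t). field. auto. }
    assert (dp : 0 < Rmin (1/6) (eps/3)) by (apply Rmin_pos; pose proof (cond_pos eps); lra).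
    exists (mkposreal _ dp). intros y Hy Hy0. simpl in Hy.
    assert (d1 := Rmin_l (1/6) (eps/3)). assert (d2 := Rmin_r (1/6) (eps/3)).
    rewrite (Hq y Hy0). pose proof (Hne y Hy0). set (x := Ginv y) in *.
    destruct (G_ratio kappa k0 k1 x H) as [[A B] C].
    assert (Gx : G kappa x = y) by apply HGi. rewrite Gx in A, B, C |- *.
    set (r := y / x) in *.
    assert (Ey : y = r * x) by (unfold r; field; auto).
    assert (Hax : Rabs y = r * Rabs x) by (rewrite Ey, Rabs_mult, Rabs_pos_eq; lra).
    assert (Hx1 : Rabs x < 1/2) by nra.
    assert (Hx2 : Rabs x < eps) by nra.
    assert (gx : g kappa x = sqrt (1 - kappa * x^2)).
    { unfold g. rewrite g_pos_lo by lra. f_equal. rewrite <- (Rabs_pos_eq (x^2)) by nra.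
      rewrite RPow_abs. reflexivity. }
    assert (xx : x^2 = Rabs x * Rabs x) by (rewrite <- Rabs_mult; rewrite Rabs_pos_eq; nra).
    assert (x2 : 0 <= x^2 < 1/4). { rewrite xx. pose proof (Rabs_pos x). nra. }
    assert (kx : 0 <= kappa * x^2 <= x^2/3) by nra.
    assert (su : 1 - kappa * x^2 <= sqrt (1 - kappa * x^2)).
    { assert (0 <= 1 - kappa * x^2 <= 1) by lra.
      pose proof (sqrt_sqrt (1 - kappa*x^2) ltac:(lra)).
      pose proof (sqrt_le_1_alt _ _ (proj2 H0)). rewrite sqrt_1 in H2.
      pose proof (sqrt_pos (1 - kappa*x^2)). nra. }
    rewrite gx in A.
    assert (1 - r <= x^2 / 3) by lra.
    assert (11/12 <= r) by lra.
    rewrite Rabs_pos_eq.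
    + replace (1/r - 1) with ((1-r)/r) by (field; lra).
      apply Rmult_lt_reg_r with r; [lra|]. replace ((1-r)/r*r) with (1-r) by (field; lra).
      assert (x^2 < Rabs x / 2) by (rewrite xx; pose proof (Rabs_pos x); nra).
      pose proof (cond_pos eps). assert (eps*(11/12) <= eps*r) by (apply Rmult_le_compat_l; lra). lra.
    + replace (1/r - 1) with ((1-r) * / r) by (field; lra).
      apply Rmult_le_pos; [lra|]. left; apply Rinv_0_lt_compat; lra.
Qed.

Lemma part3 (kappa : R) (Ginv : R -> R) :
  0 < kappa -> kappa < 1 / 3 ->
  (forall t, G kappa (Ginv t) = t) ->
  (forall x, Ginv (G kappa x) = x) ->
  forall t, 0 <= t -> t <= Ginv t <= 3 * t.
Proof.
  intros k0 k1 HGi HiG.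
  pose proof (cc_pos kappa k0 k1) as Hcc.
  assert (Hne : forall t, t <> 0 -> Ginv t <> 0).
  { intros t Ht E. apply Ht. rewrite <- (HGi t), E. apply G0. }
  { intros t Ht. destruct (Req_dec t 0).
    { subst. assert (E: Ginv (G kappa 0) = 0) by apply HiG. rewrite G0 in E. rewrite E. lra. }
    pose proof (Hne t H). set (x := Ginv t) in *.
    destruct (G_ratio kappa k0 k1 x H0) as [[A B] C]. assert (Gx : G kappa x = t) by apply HGi. rewrite Gx in A, B, C.
    assert (0 < x).
    { destruct (Rlt_dec 0 x); auto. assert (x < 0) by lra.
      assert (0 < t / (-x)) by (apply Rdiv_lt_0_compat; lra).
      replace (t/(-x)) with (-(t/x)) in H2 by (field; lra). lra. }
    split.
    - apply div_le in B; lra.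
    - apply div_ge in C; nra. }
Qed.

Lemma part2 (kappa : R) (Ginv : R -> R) :
  0 < kappa -> kappa < 1 / 3 ->
  (forall t, G kappa (Ginv t) = t) ->
  (forall x, Ginv (G kappa x) = x) ->
  forall eps : posreal, exists M : R, forall t : R, M < t ->
    Rabs (Ginv t / t - sqrt (1 - kappa) / (1 - 2 * kappa)) < eps.
Proof.
  intros k0 k1 HGi HiG eps.
  pose proof (cc_pos kappa k0 k1) as Hcc. pose proof (ca_pos kappa k0 k1) as Hca.
  pose proof (cond_pos eps) as He0. set (e0 := pos eps) in *.
  assert (Ec : sqrt (1 - kappa) / (1 - 2 * kappa) = 1 / cc kappa).
  { unfold cc, sk. assert (0 < sqrt (1 - kappa)) by (apply sqrt_lt_R0; lra). field. lra. }
  rewrite Ec. set (c := cc kappa) in *.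
  set (e := e0 * c^2 / 2).
  assert (ep : 0 < e) by (unfold e; apply Rdiv_lt_0_compat; [apply Rmult_lt_0_compat; [lra| nra]|lra]).
  set (K := Rmax 1 (ca kappa / e)).
  assert (K1 : 1 <= K) by apply Rmax_l. assert (K2 : ca kappa / e <= K) by apply Rmax_r.
  exists (Rmax K (K/e)). intros t Ht.
  assert (M1 := Rmax_l K (K/e)). assert (M2 := Rmax_r K (K/e)).
  destruct (part3 kappa Ginv k0 k1 HGi HiG t ltac:(lra)) as [X1 X2].
  set (x := Ginv t) in *.
  assert (Gx : G kappa x = t) by apply HGi.
  destruct (G_ratio kappa k0 k1 x ltac:(lra)) as [_ C]. rewrite Gx in C.
  apply div_ge in C; [|lra]. change (cc kappa) with c in C.
  assert (Up : t <= K + (c + e) * (x - K)).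
  { rewrite <- Gx. unfold G. rewrite <- (RInt_Chasles (g kappa) 0 K x) by (apply g_int; auto).
    unfold plus; simpl.
    destruct (RInt_bounds (g kappa) 0 K c 1) as [_ U1]; [lra|apply g_int; auto| |].
    { intros; split; [apply g_gecc; auto|apply g_le1; auto]. }
    destruct (RInt_bounds (g kappa) K x c (c + e)) as [_ U2]; [lra|apply g_int; auto| |].
    { intros s Hs; split; [apply g_gecc; auto|]. unfold g. rewrite Rabs_pos_eq by lra.
      apply g_pos_small; auto; lra. }
    lra. }
  assert (Kx : K < e * x).
  { assert (K / e < x) by lra. apply Rmult_lt_compat_l with (r:=e) in H; [|lra].
    replace (e * (K/e)) with K in H by (field; lra). lra. }
  assert (tp : 0 < t) by lra.
  assert (xp : 0 < x) by lra.
  replace (x / t - 1 / c) with (- ((t - c * x) / (t * c))) by (field; lra).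
  rewrite Rabs_Ropp. rewrite Rabs_pos_eq.
  - apply Rmult_lt_reg_r with (t * c); [nra|].
    replace ((t - c * x) / (t * c) * (t * c)) with (t - c * x) by (field; lra).
    assert (t - c * x < 2 * e * x) by nra.
    assert (2 * e * x = e0 * c * (c * x)) by (unfold e; field).
    assert (e0 * c * (c * x) <= e0 * c * t) by (apply Rmult_le_compat_l; nra).
    nra.
  - apply Rmult_le_pos; [lra|]. left; apply Rinv_0_lt_compat; nra.
Qed.

Theorem lemma4p1 (kappa : R) (Ginv : R -> R) :
  0 < kappa -> kappa < 1 / 3 ->
  (forall t, G kappa (Ginv t) = t) ->
  (forall x, Ginv (G kappa x) = x) ->
  is_lim (fun t => Ginv t / t) 0 1 /\
  is_lim (fun t => Ginv t / t) p_infty (sqrt (1 - kappa) / (1 - 2 * kappa)) /\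
  (forall t, 0 <= t -> t <= Ginv t <= 3 * t) /\
  (forall t, 0 <= t ->
     -(3 / 2) <= t / g kappa t * Derive (g kappa) t /\
     t / g kappa t * Derive (g kappa) t <= 0).
Proof.
  intros k0 k1 HGi HiG.
  pose proof (cc_pos kappa k0 k1) as Hcc.
  assert (Hne : forall t, t <> 0 -> Ginv t <> 0).
  { intros t Ht E. apply Ht. rewrite <- (HGi t), E. apply G0. }
  assert (Hq : forall t, t <> 0 -> Ginv t / t = 1 / (G kappa (Ginv t) / Ginv t)).
  { intros t Ht. pose proof (Hne t Ht). rewrite (HGi t). field. auto. }
  assert (P3 : forall t, 0 <= t -> t <= Ginv t <= 3 * t).
  { intros t Ht. destruct (Req_dec t 0).
    { subst. assert (E: Ginv (G kappa 0) = 0) by apply HiG. rewrite G0 in E. rewrite E. lra. }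
    pose proof (Hne t H). set (x := Ginv t) in *.
    destruct (G_ratio kappa k0 k1 x H0) as [[A B] C]. assert (Gx : G kappa x = t) by apply HGi. rewrite Gx in A, B, C.
    assert (0 < x).
    { destruct (Rlt_dec 0 x); auto. assert (x < 0) by lra.
      assert (0 < t / (-x)) by (apply Rdiv_lt_0_compat; lra).
      replace (t/(-x)) with (-(t/x)) in H2 by (field; lra). lra. }
    split.
    - apply div_le in B; lra.
    - apply div_ge in C; nra. }
  split; [|split; [|split; auto]].
  - apply is_lim_spec. intro eps. simpl. unfold locally', within.
    destruct (part1 kappa Ginv k0 k1 HGi HiG eps) as [d Hd]. exists d.
    intros y Hy Hy0. apply Hd; auto.
    unfold ball in Hy; simpl in Hy; unfold AbsRing_ball, abs, minus, plus, opp in Hy; simpl in Hy.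
    rewrite Ropp_0, Rplus_0_r in Hy. auto.
  - apply is_lim_spec. intro eps. simpl.
    destruct (part2 kappa Ginv k0 k1 HGi HiG eps) as [M HM]. exists M. auto.
  - intros; apply part4; auto.
Qed.
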